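(* If $B^{(0)}(X,Y),\dots,B^{(\ell)}(X,Y)\in\mathbb F_q[X,Y]$ is a basis of the $\mathbb F_q[X]$-module $M_{s,\ell}$, then $G(X)^{s+1},\,B^{(0)}(X,Y)(Y-R(X)),\dots,B^{(\ell)}(X,Y)(Y-R(X))$ is a basis of $M_{s+1,\ell+1}$.
   Context: Let $\mathbb F_q$ be a finite field and $n<q$. Let $\alpha_0,\dots,\alpha_{n-1}$ be distinct nonzero elements of $\mathbb F_q$, $w_0,\dots,w_{n-1}$ nonzero elements of $\mathbb F_q$, $r\in\mathbb F_q^n$, $r_i'=r_i/w_i$, $G(X)=\prod_i(X-\alpha_i)$, and $R(X)$ the unique polynomial of degree less than $n$ with $R(\alpha_i)=r_i'$. For positive integers $s\le\ell$, $M_{s,\ell}$ is the $\mathbb F_q[X]$-module of all $Q\in\mathbb F_q[X,Y]$ of $Y$-degree at most $\ell$ such that for every $i$, $Q(X+\alpha_i,Y+r_i')$ has no monomials of total degree less than $s$. *)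

(* Defs.v *)
(* Bivariate polynomials in F_q[X,Y] are represented as
   {poly {poly F}}: the outer variable is Y, the coefficients are in F[X]. *)
From HB Require Import structures.
From mathcomp Require Import all_boot all_order all_algebra all_field.
Set Implicit Arguments. Unset Strict Implicit. Unset Printing Implicit Defensive.
Import Order.TTheory GRing.Theory.
Local Open Scope ring_scope.

Section Defs.
Variable F : fieldType.

Definition shift2 (a b : F) (Q : {poly {poly F}}) : {poly {poly F}} :=
  (map_poly (fun p : {poly F} => p \Po ('X + a%:P)) Q) \Po ('X + (b%:P)%:P).

Definition coef2 (Q : {poly {poly F}}) (i j : nat) : F := (Q`_j)`_i.

Definition no_low_monomials (s : nat) (Q : {poly {poly F}}) : Prop :=
  forall i j : nat, (i + j < s)%N -> coef2 Q i j = 0.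

Definition inM (n : nat) (alpha r' : 'I_n -> F) (s l : nat)
    (Q : {poly {poly F}}) : Prop :=
  (size Q <= l.+1)%N /\
  forall i : 'I_n, no_low_monomials s (shift2 (alpha i) (r' i) Q).

Definition lincomb (k : nat) (c : 'I_k -> {poly F}) (B : 'I_k -> {poly {poly F}})
  : {poly {poly F}} := \sum_(i < k) (c i)%:P * B i.

Definition is_basis (M : {poly {poly F}} -> Prop) (k : nat)
    (B : 'I_k -> {poly {poly F}}) : Prop :=
  [/\ forall i, M (B i),
      forall Q, M Q -> exists c : 'I_k -> {poly F}, Q = lincomb c B
    & forall c : 'I_k -> {poly F}, lincomb c B = 0 -> forall i, c i = 0].

Definition ext_family (k : nat) (G0 : {poly F}) (R : {poly F})
    (B : 'I_k -> {poly {poly F}}) (i : 'I_k.+1) : {poly {poly F}} :=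
  if unlift ord0 i is Some j then B j * ('X - R%:P) else G0%:P.

End Defs.

(* Main.v *)
Require Import Defs.
From HB Require Import structures.
From mathcomp Require Import all_boot all_order all_algebra all_field.
From mathcomp Require Import zify.
Import Order.TTheory GRing.Theory.
Local Open Scope ring_scope.

Module Aux.
Set Implicit Arguments. Unset Strict Implicit. Unset Printing Implicit Defensive.

Section H.
Variable F : fieldType.
Implicit Types (a b : F) (p q c : {poly F}) (P Q : {poly {poly F}}).

Lemma dvdXnP k p : reflect (forall i, (i < k)%N -> p`_i = 0) ('X^k %| p).
Proof.
apply: (iffP idP).
  by case/dvdpP => q -> i ik; rewrite coefMXn ik.
move=> H; apply/dvdpP; exists (\poly_(i < size p) p`_(i + k)).
apply/polyP => i; rewrite coefMXn; case: ltnP => ik; first by rewrite H.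
rewrite coef_poly subnK //; case: ltnP => // hs.
by apply: nth_default; apply: leq_trans (leq_subr k i).
Qed.

Lemma nlmP s P : no_low_monomials s P <-> forall j, 'X^(s - j) %| P`_j.
Proof.
split.
  move=> H j; apply/dvdXnP => i hi; apply: H; lia.
move=> H i j hij; rewrite /coef2; move/dvdXnP: (H j); apply.
lia.
Qed.

Definition S2 a b P := shift2 a b P.

Lemma shift2_mul a b P Q : shift2 a b (P * Q) = shift2 a b P * shift2 a b Q.
Proof.
rewrite /shift2.
have -> : map_poly (fun p : {poly F} => p \Po ('X + a%:P)) (P * Q) =
  map_poly (comp_poly ('X + a%:P)) (P * Q) by [].
by rewrite rmorphM comp_polyM.
Qed.

Lemma shift2_add a b P Q : shift2 a b (P + Q) = shift2 a b P + shift2 a b Q.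
Proof.
rewrite /shift2.
have -> : map_poly (fun p : {poly F} => p \Po ('X + a%:P)) (P + Q) =
  map_poly (comp_poly ('X + a%:P)) (P + Q) by [].
by rewrite rmorphD comp_polyD.
Qed.

Lemma shift2_sub a b P Q : shift2 a b (P - Q) = shift2 a b P - shift2 a b Q.
Proof.
rewrite /shift2.
have -> : map_poly (fun p : {poly F} => p \Po ('X + a%:P)) (P - Q) =
  map_poly (comp_poly ('X + a%:P)) (P - Q) by [].
by rewrite rmorphB comp_polyB.
Qed.

Lemma shift2_C a b c : shift2 a b c%:P = (c \Po ('X + a%:P))%:P.
Proof. by rewrite /shift2 map_polyC comp_polyC. Qed.

Lemma shift2_X a b : shift2 a b 'X = 'X + (b%:P)%:P.
Proof. by rewrite /shift2 map_polyX comp_polyX. Qed.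


Lemma coefML P T j :
  (P * ('X - T%:P))`_j = (if j == 0%N then 0 else P`_j.-1) - P`_j * T.
Proof. by rewrite mulrBr coefB coefMX coefMC. Qed.

Lemma nlm_mulL s P T : 'X %| T -> (forall j, 'X^(s - j) %| P`_j) ->
  forall j, 'X^(s.+1 - j) %| (P * ('X - T%:P))`_j.
Proof.
move=> hT hP j; rewrite coefML; apply: dvdp_sub.
  case: j => [|j] /=; first exact: dvdp0.
  by rewrite subSS.
case: (leqP j s) => hj.
  have -> : (s.+1 - j = (s - j) + 1)%N by lia.
  by rewrite exprD expr1; apply: dvdp_mul.
have -> : (s.+1 - j = 0)%N by lia.
by rewrite expr0 dvd1p.
Qed.

Lemma nlm_divL s P T : 'X %| T ->
  (forall j, 'X^(s.+1 - j) %| (P * ('X - T%:P))`_j) ->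
  forall j, 'X^(s - j) %| P`_j.
Proof.
move=> hT hP.
suff H : forall k j, (s - j <= k)%N -> 'X^(s - j) %| P`_j.
  by move=> j; apply: (H (s - j)%N).
elim=> [|k IH] j hk.
  have -> : (s - j = 0)%N by lia.
  by rewrite expr0 dvd1p.
case: (leqP (s - j) k) => hk2; first exact: IH.
have hj1 := IH j.+1 ltac:(lia).
have := hP j.+1; rewrite coefML /= => hd.
have e : P`_j = (P`_j - P`_j.+1 * T) + P`_j.+1 * T by rewrite subrK.
rewrite e; apply: dvdp_add.
  by have <- : (s.+1 - j.+1 = s - j)%N by lia.
have -> : (s - j = (s - j.+1) + 1)%N by lia.
by rewrite exprD expr1; apply: dvdp_mul.
Qed.

Lemma nlm_horner s P T : 'X %| T -> (forall j, 'X^(s - j) %| P`_j) ->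
  'X^s %| P.[T].
Proof.
move=> hT hP; rewrite horner_coef; apply: (big_ind (fun x => _ %| x)); [exact: dvdp0|exact: dvdp_add|move=> j _].
apply: dvdp_trans (dvdp_mul (hP j) (dvdp_exp2r j hT)).
by rewrite -exprD dvdp_exp2l //; lia.
Qed.

Lemma dvdX_shift k c a :
  ('X^k %| c \Po ('X + a%:P)) = (('X - a%:P) ^+ k %| c).
Proof.
apply/idP/idP => h.
  have := dvdp_comp_poly ('X - a%:P) h.
  rewrite comp_polyXaddC_K.
  suff -> : 'X^k \Po ('X - a%:P) = ('X - a%:P) ^+ k by [].
  elim: k {h} => [|k IH]; first by rewrite !expr0 comp_polyC.
  by rewrite !exprS comp_polyM IH comp_polyX.
have := dvdp_comp_poly ('X + a%:P) h.
suff -> : ('X - a%:P) ^+ k \Po ('X + a%:P) = 'X^k by [].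
elim: k {h} => [|k IH]; first by rewrite !expr0 comp_polyC.
by rewrite !exprS comp_polyM IH comp_polyB comp_polyX comp_polyC addrK.
Qed.


Lemma dvdp_prod_seq k (xs : seq F) p : uniq xs ->
  (forall x, x \in xs -> ('X - x%:P) ^+ k %| p) ->
  \prod_(x <- xs) ('X - x%:P) ^+ k %| p.
Proof.
elim: xs => [|x xs IH] /=; first by rewrite big_nil dvd1p.
case/andP => hx hu H; rewrite big_cons Gauss_dvdp.
  by rewrite H ?mem_head // IH // => y hy; apply: H; rewrite inE hy orbT.
apply: coprimep_expl; rewrite coprimep_sym coprimep_XsubC.
rewrite /root horner_prod prodf_seq_neq0; apply/allP => y hy /=.
rewrite horner_exp hornerXsubC expf_neq0 // subr_eq0.
by apply: contraNneq hx => ->.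
Qed.

Lemma dvdp_prod_fin k (I : finType) (al : I -> F) p : injective al ->
  (forall i, ('X - (al i)%:P) ^+ k %| p) ->
  (\prod_(i : I) ('X - (al i)%:P)) ^+ k %| p.
Proof.
move=> hinj H; rewrite -prodrXl.
rewrite -(big_map al xpredT (fun x => ('X - x%:P) ^+ k)).
apply: dvdp_prod_seq.
  by rewrite map_inj_uniq // index_enum_uniq.
by move=> x /mapP [i _ ->].
Qed.

End H.

Section Main.
Variable F : fieldType.
Variables (n : nat) (alpha r' : 'I_n -> F) (R : {poly F}).
Hypothesis halpha : injective alpha.
Hypothesis hR : forall i, R.[alpha i] = r' i.
Let G := \prod_(i < n) ('X - (alpha i)%:P).
Let T i := R \Po ('X + (alpha i)%:P) - (r' i)%:P.

Lemma XdvdT i : 'X %| T i.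
Proof.
have -> : 'X = 'X - 0%:P :> {poly F} by rewrite subr0.
rewrite dvdp_XsubCl /root /T hornerD hornerN hornerC horner_comp.
by rewrite hornerD hornerX hornerC add0r hR subrr.
Qed.

Lemma shiftL i : shift2 (alpha i) (r' i) ('X - R%:P) = 'X - (T i)%:P.
Proof.
rewrite shift2_sub shift2_X shift2_C /T polyCB.
by rewrite opprB addrA addrAC -addrA [_ + (r' i)%:P%:P]addrC.
Qed.

Lemma memL s l P : inM alpha r' s l P -> inM alpha r' s.+1 l.+1 (P * ('X - R%:P)).
Proof.
case=> hsz hP; split.
  apply: leq_trans (size_polyMleq _ _) _; rewrite size_XsubC addn2 /=; exact: hsz.
move=> i; rewrite shift2_mul shiftL; apply/nlmP; apply: nlm_mulL.
  exact: XdvdT.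
by apply/nlmP.
Qed.

Lemma memG s l : inM alpha r' s.+1 l.+1 ((G ^+ s.+1)%:P).
Proof.
split; first by apply: leq_trans (size_polyC_leq1 _) _.
move=> i; rewrite shift2_C; apply/nlmP => j; rewrite coefC.
case: eqP => [->|_]; last exact: dvdp0.
rewrite subn0 dvdX_shift; apply: dvdp_exp2r.
rewrite dvdp_XsubCl /root /G horner_prod (bigD1 i) //=.
by rewrite hornerXsubC subrr mul0r.
Qed.

Lemma decomp s l Q : inM alpha r' s.+1 l.+1 Q ->
  exists Q1 c0, Q = Q1 * ('X - R%:P) + (c0 * G ^+ s.+1)%:P /\ inM alpha r' s l Q1.
Proof.
case=> hsz hQ.
set Q0 := Q.[R].
have : root (Q - Q0%:P) R by rewrite /root hornerD hornerN hornerC subrr.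
case/factor_theorem => Q1 hQ1.
have key i : 'X^(s.+1) %| Q0 \Po ('X + (alpha i)%:P) /\
    no_low_monomials s.+1 (shift2 (alpha i) (r' i) Q1 * ('X - (T i)%:P)).
  have e := congr1 (shift2 (alpha i) (r' i)) hQ1.
  rewrite shift2_sub shift2_mul shiftL shift2_C in e.
  have e2 : Q0 \Po ('X + (alpha i)%:P) = (shift2 (alpha i) (r' i) Q).[T i].
    have := congr1 (fun P => P.[T i]) e => /=.
    rewrite hornerD hornerN hornerC hornerM hornerD hornerN hornerX hornerC.
    rewrite subrr mulr0 => /eqP; rewrite subr_eq0 => /eqP <-; by [].
  have hd : 'X^(s.+1) %| Q0 \Po ('X + (alpha i)%:P).
    rewrite e2; apply: nlm_horner; first exact: XdvdT.
    by apply/nlmP.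
  split => //; rewrite -e; apply/nlmP => j; rewrite coefB coefC.
  apply: dvdp_sub; first by move/nlmP: (hQ i).
  by case: eqP => [->|_]; [rewrite subn0|exact: dvdp0].
have hG : G ^+ s.+1 %| Q0.
  apply: dvdp_prod_fin => // i; rewrite -dvdX_shift; exact: (key i).1.
exists Q1, (Q0 %/ G ^+ s.+1); split.
  by rewrite divpK // -hQ1 subrK.
split.
  have [->|nz] := eqVneq Q1 0; first by rewrite size_poly0.
  have := size_polyD Q (- Q0%:P); rewrite hQ1 size_Mmonic ?monicXsubC //.
  rewrite size_XsubC addn2 /= size_polyN => h.
  move: h; rewrite leq_max => /orP [h|h]; first exact: leq_trans h hsz.
  by move: (leq_trans h (size_polyC_leq1 Q0)); rewrite ltnS leqn0 => /eqP ->.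
move=> i; apply/nlmP; apply: (nlm_divL (XdvdT i)); apply/nlmP; exact: (key i).2.
Qed.

Lemma lincomb_ext s l (c : 'I_l.+2 -> {poly F}) B :
  lincomb c (ext_family (G ^+ s.+1) R B) = (c ord0 * G ^+ s.+1)%:P +
    lincomb (fun j => c (lift ord0 j)) B * ('X - R%:P).
Proof.
rewrite /lincomb big_ord_recl /ext_family unlift_none polyCM; congr (_ + _).
rewrite mulr_suml; apply: eq_bigr => j _; by rewrite liftK mulrA.
Qed.

End Main.
End Aux.
Import Aux.

Theorem lemma9 (F : finFieldType) (n : nat) (hnq : (n < #|F|)%N)
  (alpha w r : 'I_n -> F)
  (halpha_inj : injective alpha)
  (halpha_nz : forall i, alpha i != 0)
  (hw_nz : forall i, w i != 0)
  (R : {poly F})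
  (hR_size : (size R <= n)%N)
  (hR_interp : forall i, R.[alpha i] = r i / w i)
  (s l : nat) (hs : (0 < s)%N) (hsl : (s <= l)%N)
  (B : 'I_l.+1 -> {poly {poly F}}) :
  let r' := fun i => r i / w i in
  let G := \prod_(i < n) ('X - (alpha i)%:P) in
  is_basis (inM alpha r' s l) B ->
  is_basis (inM alpha r' s.+1 l.+1) (ext_family (G ^+ s.+1) R B).
Proof.
move=> r' G [hmem hspan hind].
have hR : forall i, R.[alpha i] = r' i := hR_interp.
split.
- move=> i; rewrite /ext_family; case: (unlift ord0 i) => [j|].
    exact: (memL hR (hmem j)).
  exact: memG.
- move=> Q hQ.
  have [Q1 [c0 [eQ hQ1]]] := decomp halpha_inj hR hQ.
  have [c hc] := hspan Q1 hQ1.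
  exists (fun i => if unlift ord0 i is Some j then c j else c0).
  rewrite lincomb_ext unlift_none eQ hc addrC; congr (_ + _ * _).
  by rewrite /lincomb; apply: eq_bigr => j _; rewrite liftK.
- move=> c hc.
  rewrite lincomb_ext in hc.
  have hG : G ^+ s.+1 != 0.
    by rewrite expf_neq0 // monic_neq0 // monic_prod_XsubC.
  have hL : ('X - R%:P) != 0 by rewrite monic_neq0 // monicXsubC.
  have h0 : c ord0 = 0.
    have := congr1 (fun P => P.[R]) hc => /=.
    rewrite hornerD hornerC hornerM hornerXsubC subrr mulr0 horner0 => h.
    have {h} : c ord0 * G ^+ s.+1 = 0 by rewrite -[RHS]h; symmetry; apply: addr0.
    by move/eqP; rewrite mulf_eq0 (negPf hG) orbF => /eqP.
  rewrite h0 mul0r polyC0 add0r in hc.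
  move/eqP: hc; rewrite mulf_eq0 (negPf hL) orbF => /eqP hc.
  have := hind _ hc => hj i.
  by case: (unliftP ord0 i) => [j ->|->].
Qed.
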